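(* Let $\ell\ge 1$, let $k_1$ be a nonnegative integer and $k_2,\ldots,k_\ell$ positive integers, and let $D$ be a digraph with $\delta^+(D)\geq \sum_{i=1}^{\ell} k_i$. Then for every vertex $v\in V(D)$, $D$ contains (as a subdigraph) a path $P(k'_1,k'_2,\ldots,k'_\ell)$ with initial vertex $v$ such that $k'_i\ge k_i$ for every odd $i$ and $k'_i=k_i$ for every even $i$.
   Context: $\delta^+(D)$ denotes the minimum out-degree of $D$. For a nonnegative integer $k_1$ and positive integers $k_2,\ldots,k_\ell$, $P(k_1,\ldots,k_\ell)$ denotes the oriented path obtained from an undirected path $v_1v_2\ldots v_{\ell+1}$ by replacing, for each $i\in\{1,\ldots,\ell\}$, the edge $v_iv_{i+1}$ by a directed path of length $k_i$ from $v_i$ to $v_{i+1}$ if $i$ is odd, and from $v_{i+1}$ to $v_i$ if $i$ is even (if $k_1=0$ then $v_1=v_2$). Its initial vertex is $v_1$. *)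

(* Defs.v *)
From mathcomp Require Import all_boot.
Set Implicit Arguments. Unset Strict Implicit. Unset Printing Implicit Defensive.

(* A digraph is a finite type V with an arc relation E (E x y = arc x -> y),
   assumed loopless (irreflexive) in the statement; no parallel arcs by construction. *)

Definition outdeg (V : finType) (E : rel V) (x : V) : nat := #|[set y | E x y]|.

(* For ks = [:: k_1; ...; k_l] (0-indexed list), the orientation sequence of the
   oriented path P(k_1,...,k_l) read from its initial vertex: the i-th block
   (1-indexed) consists of k_i arcs, forward (true) if i is odd, backward if even.
   With 0-indexing, block i is forward iff i is even. *)
Definition path_dirs (ks : seq nat) : seq bool :=
  flatten [seq nseq (nth 0 ks i) (~~ odd i) | i <- iota 0 (size ks)].

Definition contains_oriented_path (V : finType) (E : rel V) (ks : seq nat) (v : V) :=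
  exists s : seq V,
    [/\ size s = (size (path_dirs ks)).+1, uniq s, head v s = v &
        forall j, j < size (path_dirs ks) ->
          if nth true (path_dirs ks) j then E (nth v s j) (nth v s j.+1)
          else E (nth v s j.+1) (nth v s j)].

(* Main.v *)
Require Import Defs.
From mathcomp Require Import all_boot.
Set Implicit Arguments. Unset Strict Implicit. Unset Printing Implicit Defensive.

Fixpoint pd (par : bool) (ks : seq nat) : seq bool :=
  if ks is k :: r then nseq k par ++ pd (~~ par) r else [::].

Fixpoint condr (par : bool) (ks ks' : seq nat) : bool :=
  match ks, ks' with
  | [::], [::] => true
  | k :: r, k' :: r' => (if par then k <= k' else k' == k) && condr (~~ par) r r'
  | _, _ => false
  end.

Fixpoint okp (V : Type) (E : V -> V -> bool) (d : seq bool) (s : seq V) : bool :=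
  match d, s with
  | [::], [:: _] => true
  | b :: d', x :: ((y :: _) as s') => (if b then E x y else E y x) && okp E d' s'
  | _, _ => false
  end.

Lemma okp_size (V : Type) (E : V -> V -> bool) d s : okp E d s -> size s = (size d).+1.
Proof.
elim: d s => [|b d IH] [|x [|y s]] //=; by move=> /andP[_ /IH /= ->].
Qed.

Lemma okp_nth (V : Type) (E : V -> V -> bool) d s x0 : okp E d s ->
  forall j, j < size d ->
  if nth true d j then E (nth x0 s j) (nth x0 s j.+1) else E (nth x0 s j.+1) (nth x0 s j).
Proof.
elim: d s => [|b d IH] [|x [|y s]] //= /andP[H1 H2] [|j] //= Hj.
exact: (IH (y :: s) H2 j Hj).
Qed.

Lemma okp_cat (V : Type) (E : V -> V -> bool) d1 d2 z t s2 :
  okp E d1 (z :: t) -> okp E d2 (last z t :: s2) -> okp E (d1 ++ d2) (z :: t ++ s2).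
Proof.
elim: d1 z t => [|b d1 IH] z [|y t] //= .
move=> /andP[H1 H2] H3; rewrite H1 /=.
exact: (IH y t H2 H3).
Qed.

Lemma okp_back (V : Type) (E : V -> V -> bool) v q :
  path (fun x y => E y x) v q -> okp E (nseq (size q) false) (v :: q).
Proof.
elim: q v => [|y q IH] v //= /andP[H1 H2]; rewrite H1 /=; exact: IH.
Qed.

Lemma okp_prepend (V : Type) (E : V -> V -> bool) y s' k r p x :
  path E x p -> E (last x p) y -> okp E (pd true (k :: r)) (y :: s') ->
  okp E (pd true ((k + size p).+1 :: r)) (x :: p ++ y :: s').
Proof.
elim: p x k => [|z p IH] x k /=.
  by move=> _ Hxy H; rewrite addn0 Hxy.
move=> /andP[Hxz Hp] Hl H.
have := IH z k Hp Hl H. rewrite /= addnS Hxz /=. by [].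
Qed.

Lemma condr_nth par ks ks' : condr par ks ks' ->
  size ks' = size ks /\ forall i, i < size ks ->
   if odd i == par then nth 0 ks' i = nth 0 ks i else nth 0 ks i <= nth 0 ks' i.
Proof.
elim: ks ks' par => [|k r IH] [|k' r'] par //= /andP[H1 H2].
have [-> H] := IH _ _ H2; split => // [[|i]] /=.
  by case: par H1 H2 H => //= /eqP.
move=> Hi; have := H i Hi.
by case: par H1 H2 H; case: (odd i).
Qed.

Lemma path_dirs_pd ks : path_dirs ks = pd true ks.
Proof.
rewrite /path_dirs.
suff: forall m, flatten [seq nseq (nth 0 ks i) (~~ odd (i + m)) | i <- iota 0 (size ks)] = pd (~~ odd m) ks.
  by move=> /(_ 0) <-; congr flatten; apply: eq_map => i; rewrite addn0.
elim: ks => [|k r IH] m //=.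
rewrite add0n; congr (_ ++ _).
have -> : iota 1 (size r) = map (addn 1) (iota 0 (size r)) by rewrite -iotaDl.
have := IH m.+1; rewrite /= negbK => <-.
congr flatten; rewrite -map_comp; apply: eq_map => i /=.
by rewrite add0n addnS /= negbK.
Qed.
Definition resE (V : finType) (E : rel V) (S : {set V}) : rel V :=
  fun x y => [&& x \in S, y \in S & E x y].

Lemma closed_reach (T : finType) (e : rel T) (P : pred T) x y :
  (forall a b, P a -> e a b -> P b) -> P x -> connect e x y -> P y.
Proof.
move=> Hc Px /connectP[p Hp ->]; elim: p x Px Hp => [|z p IH] x Px //= /andP[H1 H2].
exact: (IH z (Hc _ _ Px H1) H2).
Qed.

Lemma connect_closed (T : finType) (e f : rel T) (P : pred T) x y :
  (forall a b, P a -> e a b -> P b && f a b) -> P x -> connect e x y -> connect f x y.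
Proof.
move=> Hc Px /connectP[p Hp ->]; elim: p x Px Hp => [|z p IH] x Px //= /andP[H1 H2].
have /andP[Pz Fxz] := Hc _ _ Px H1.
exact: (connect_trans (connect1 Fxz) (IH z Pz H2)).
Qed.

Lemma path_to_last (T : finType) (e : rel T) x p z :
  path e x p -> z \in x :: p -> connect e z (last x p).
Proof.
elim: p x z => [|y p IH] x z /=; first by rewrite inE => _ /eqP ->.
move=> /andP[H1 H2]; rewrite inE => /orP[/eqP ->|Hz].
  exact: (connect_trans (connect1 H1) (IH y y H2 (mem_head _ _))).
exact: IH.
Qed.

Lemma path_exit (T : Type) (e : rel T) (P : pred T) x p :
  P x -> ~~ P (last x p) -> path e x p -> exists u w, [/\ P u, ~~ P w & e u w].
Proof.
elim: p x => [|y p IH] x /=; first by move=> ->.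
move=> Px Hl /andP[H1 H2]; case Py: (P y).
  exact: (IH y Py Hl H2).
by exists x, y; rewrite Px Py H1.
Qed.

Lemma path_resE (V : finType) (E : rel V) (S : {set V}) x p :
  path (resE E S) x p -> path E x p /\ all (mem S) p.
Proof.
elim: p x => [|y p IH] x //= /andP[/and3P[_ Hy Hxy] H2].
by have [-> ->] := IH y H2; rewrite Hxy Hy.
Qed.

Lemma L2 (V : finType) (E : rel V) : irreflexive E -> forall K (C : {set V}) v,
  v \in C -> (forall x, x \in C -> K <= #|[set y in C | E x y]|) ->
  (forall x, x \in C -> connect (resE E C) x v) ->
  exists q, [/\ size q = K, path (fun x y => E y x) v q, uniq (v :: q) & all (mem C) q].
Proof.
move=> Eirr; elim=> [|K IH] C v vC Hdeg Hcon; first by exists [::].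
pose P (X : {set V}) := [&& X \subset C :\ v, X != set0 &
   [forall z in X, forall w in C, E z w ==> (w \in X) || (w == v)]].
have P0 : P (C :\ v).
  rewrite /P subxx /=; apply/andP; split.
    have : 0 < #|[set y in C | E v y]| by apply: leq_trans (Hdeg v vC).
    case/card_gt0P => y; rewrite inE => /andP[yC Evy].
    apply/set0Pn; exists y; rewrite !inE yC andbT.
    by apply/eqP => yv; move: Evy; rewrite yv Eirr.
  apply/forall_inP => z _; apply/forall_inP => w wC; apply/implyP => _.
  by rewrite !inE wC andbT; case: (w == v).
case: (@arg_minnP _ (C :\ v) P (fun X : {set V} => #|X|) P0) => C' PC' Hmin.
case/and3P: PC' => sC' neC' /forall_inP clC'.
have clo : forall z w, z \in C' -> w \in C -> E z w -> (w \in C') || (w == v).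
  by move=> z w zC' wC Ezw; have /forall_inP/(_ w wC)/implyP := clC' z zC'; apply.
have C'C : forall z, z \in C' -> (z \in C) && (z != v).
  by move=> z zC'; have := subsetP sC' z zC'; rewrite !inE andbC.
have scon : forall x y, x \in C' -> y \in C' -> connect (resE E C') x y.
  move=> x y xC' yC'.
  pose Y := [set z in C' | connect (resE E C') x z].
  have sYC' : Y \subset C' by apply/subsetP => z; rewrite inE => /andP[].
  have PY : P Y.
    rewrite /P; apply/and3P; split.
    - exact: subset_trans sYC' sC'.
    - by apply/set0Pn; exists x; rewrite inE xC' connect0.
    - apply/forall_inP => z; rewrite inE => /andP[zC' xz].
      apply/forall_inP => w wC; apply/implyP => Ezw.
      case/orP: (clo z w zC' wC Ezw) => [wC'|->]; last by rewrite orbT.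
      rewrite inE wC' /= (connect_trans xz) //; apply: connect1.
      by rewrite /resE zC' wC' Ezw.
  have HYC := Hmin Y PY.
  have eqY : Y = C' by apply/eqP; rewrite (@eqEcard V Y C') sYC' HYC.
  have : y \in Y by rewrite eqY.
  by rewrite inE => /andP[].
case/set0Pn: neC' => x xC'.
have [a [aC' Eav]] : exists a, a \in C' /\ E a v.
  have := Hcon x (proj1 (andP (C'C x xC'))) => /connectP[p Hp Hl].
  have [u [w [uC' wC' Huw]]] : exists u w, [/\ u \in C', w \notin C' & resE E C u w].
    apply: (path_exit (P := fun z => z \in C')) xC' _ Hp.
    by rewrite -Hl; apply/negP => /C'C; rewrite eqxx andbF.
  case/and3P: Huw => uC wC Euw; exists u; split => //.
  by case/orP: (clo u w uC' wC Euw) => [H|/eqP <-]; first by rewrite H in wC'.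
have Hdeg' : forall z, z \in C' -> K <= #|[set y in C' | E z y]|.
  move=> z zC'.
  have H1 := Hdeg z (proj1 (andP (C'C z zC'))).
  have H2 : #|[set y in C | E z y]| <= #|[set y in C' | E z y] :|: [set v]|.
    apply: subset_leq_card; apply/subsetP => w; rewrite !inE => /andP[wC Ezw].
    by case/orP: (clo z w zC' wC Ezw) => ->; rewrite ?Ezw ?orbT.
  have H3 : #|[set y in C' | E z y] :|: [set v]| <= #|[set y in C' | E z y]|.+1.
    by rewrite setUC cardsU1; case: (v \in _).
  rewrite -ltnS; exact: leq_trans H1 (leq_trans H2 H3).
have [q [Hsz Hpath Huq Hall]] := IH C' a aC'
  Hdeg' (fun z zC' => scon z a zC' aC').
exists (a :: q); split => //=.
- by rewrite Hsz.
- by rewrite Eav Hpath.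
- rewrite -/(uniq (a :: q)) Huq andbT inE negb_or; apply/andP; split.
    by apply/eqP => va; move: (C'C a aC'); rewrite va eqxx andbF.
  by apply/negP => /(allP Hall) /C'C; rewrite eqxx andbF.
- rewrite (proj1 (andP (C'C a aC'))) /=; apply/allP => z /(allP Hall) /C'C.
  by case/andP.
Qed.

Lemma main (V : finType) (E : rel V) : irreflexive E -> forall n (S : {set V}) ks v,
  #|S| <= n -> 0 < size ks -> all (fun k => 0 < k) (behead ks) ->
  (forall x, x \in S -> \sum_(k <- ks) k <= #|[set y in S | E x y]|) -> v \in S ->
  exists ks' t, [/\ condr true ks ks', okp E (pd true ks') (v :: t), uniq (v :: t)
                  & all (mem S) (v :: t)].
Proof.
move=> Eirr; elim=> [|n IH] S ks v HS Hsz Hpos Hdeg vS.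
  have : 0 < #|S| by apply/card_gt0P; exists v.
  by rewrite lt0n; move: HS; rewrite leqn0 => ->.
case: ks Hsz Hpos Hdeg => [//|k r] _ /= Hpos Hdeg.
case: k Hdeg => [|k] Hdeg; last first.
  (* first block positive: delete v *)
  have : 0 < #|[set y in S | E v y]|.
    by apply: leq_trans (Hdeg v vS); rewrite big_cons.
  case/card_gt0P => y; rewrite inE => /andP[yS Evy].
  have yS' : y \in S :\ v.
    by rewrite !inE yS andbT; apply/eqP => yv; move: Evy; rewrite yv Eirr.
  have HS' : #|S :\ v| <= n by move: HS; rewrite (cardsD1 v S) vS.
  have Hdeg' : forall x, x \in S :\ v -> \sum_(k0 <- k :: r) k0 <= #|[set y in S :\ v | E x y]|.
    move=> x; rewrite inE => /andP[_ xS].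
    have H1 := Hdeg x xS.
    have H2 : #|[set y in S | E x y]| <= #|[set y in S :\ v | E x y] :|: [set v]|.
      apply: subset_leq_card; apply/subsetP => w; rewrite !inE => /andP[wS Exw].
      by rewrite wS Exw andbT; case: (w == v).
    have H3 : #|[set y in S :\ v | E x y] :|: [set v]| <= #|[set y in S :\ v | E x y]|.+1.
      by rewrite setUC cardsU1; case: (v \in _).
    move: H1; rewrite !big_cons addSn => H1.
    by rewrite -ltnS; exact: leq_trans H1 (leq_trans H2 H3).
  have [ks'' [t [Hc Hok Hu Hall]]] := IH (S :\ v) (k :: r) y HS' isT Hpos Hdeg' yS'.
  case: ks'' Hc Hok => [|k'' r''] //= /andP[Hkk Hc] Hok.
  exists (k''.+1 :: r''), (y :: t); split.
  - by rewrite /= ltnS Hkk Hc.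
  - by have := okp_prepend (p := [::]) (x := v) isT Evy Hok; rewrite addn0.
  - rewrite cons_uniq; apply/andP; split; last exact: Hu.
    by apply/negP => /(allP Hall); rewrite !inE eqxx.
  - by rewrite vS andTb; apply/allP => z /(allP Hall); rewrite !inE => /andP[_ ->].
case: r Hpos Hdeg => [|b rest] Hpos Hdeg.
  by exists [:: 0], [::]; split => //=; rewrite vS.
case/andP: Hpos => bpos Hpos.
have Hpb : all (fun k => 0 < k) (b :: rest) by rewrite /= bpos.
pose A := [set x | connect (resE E S) x v].
pose R := [set x | connect (resE E S) v x].
have vA : v \in A by rewrite inE connect0.
have vR : v \in R by rewrite inE connect0.
have RS : forall x, x \in R -> x \in S.
  move=> x; rewrite inE; apply: (closed_reach (P := fun z => z \in S)) vS.
  by move=> c d _ /and3P[].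
have Rcl : forall c d, c \in R -> resE E S c d -> d \in R.
  move=> c d; rewrite !inE => cR Hcd; exact: (connect_trans cR (connect1 Hcd)).
have sumE : \sum_(k0 <- [:: 0, b & rest]) k0 = b + \sum_(k0 <- rest) k0.
  by rewrite !big_cons add0n.
case: (boolP [exists a, exists y, [&& a \in R, a \in A, y \in S, y \notin A & E a y]]).
  case/existsP => a /existsP[y /and5P[aR aA yS yA Eay]].
  have := aR; rewrite inE => /connectP[p0 Hp0 Ha].
  have [p [Hp Hup Hlast]] : exists p, [/\ path (resE E S) v p, uniq (v :: p) & last v p = a].
    by rewrite Ha; case: (shortenP Hp0) => p' H1 H2 _; exists p'.
  have [HpE HpS] := path_resE Hp.
  have pA : forall z, z \in v :: p -> z \in A.
    move=> z Hz; rewrite inE; apply: (connect_trans (path_to_last Hp Hz)).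
    by rewrite Hlast; move: aA; rewrite inE.
  have yS' : y \in S :\: A by rewrite inE yA yS.
  have HS' : #|S :\: A| <= n.
    have : #|S :\: A| <= #|S :\ v|.
      apply: subset_leq_card; apply/subsetP => z; rewrite !inE => /andP[zA zS].
      by rewrite zS andbT; apply: contraNneq zA => ->.
    by move/leq_trans; apply; move: HS; rewrite (cardsD1 v S) vS.
  have Hdeg' : forall x, x \in S :\: A ->
      \sum_(k0 <- [:: 0, b & rest]) k0 <= #|[set y in S :\: A | E x y]|.
    move=> x; rewrite inE => /andP[xA xS].
    apply: leq_trans (Hdeg x xS) _; apply: subset_leq_card; apply/subsetP => w.
    rewrite !inE => /andP[wS Exw]; rewrite wS Exw !andbT.
    apply: contra xA => wA; rewrite inE.
    have Hxw : resE E S x w by rewrite /resE xS wS Exw.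
    by move: wA; apply: connect_trans (connect1 Hxw).
  have [ks'' [t [Hc Hok Hu Hall]]] := IH (S :\: A) [:: 0, b & rest] y HS' isT
     Hpb Hdeg' yS'.
  case: ks'' Hc Hok => [|k'' r''] // /= Hc Hok.
  exists ((k'' + size p).+1 :: r''), (p ++ y :: t); split.
  - by rewrite /= Hc.
  - by apply: okp_prepend HpE _ Hok; rewrite Hlast.
  - rewrite -cons_uniq -cat_cons cat_uniq Hup andTb; apply/andP; split; last exact: Hu.
    apply/hasPn => z zt; have : z \in S :\: A by exact: (allP Hall z zt).
    case/setDP => _ zA; apply/negP => /pA; by rewrite (negbTE zA).
  - rewrite vS andTb all_cat HpS andTb; apply/allP => z zt.
    have : z \in S :\: A by exact: (allP Hall z zt).
    by case/setDP.
(* no escape: v is strongly reachable *)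
move=> Hne.
have RA : forall x, x \in R -> x \in A.
  move=> x xR; have := xR; rewrite inE => Hvx.
  have := closed_reach (P := fun z => (z \in A) && (z \in R)) _ _ Hvx.
  case/(_ _ _)/andP => //; last by rewrite vA vR.
  move=> c d /andP[cA cR] Hcd; have dR := Rcl c d cR Hcd; rewrite dR andbT.
  apply/negPn/negP => dA; move/negP: Hne; apply; apply/existsP; exists c; apply/existsP; exists d.
  by case/and3P: Hcd => _ dS Ecd; rewrite cR cA dS dA Ecd.
have HdegR : forall x, x \in R -> b <= #|[set y in R | E x y]|.
  move=> x xR; apply: leq_trans (_ : \sum_(k0 <- [:: 0, b & rest]) k0 <= _).
    by rewrite sumE leq_addr.
  apply: leq_trans (Hdeg x (RS x xR)) _; apply: subset_leq_card; apply/subsetP => w.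
  rewrite !inE => /andP[wS Exw]; rewrite Exw andbT.
  have Hxw : resE E S x w by rewrite /resE (RS x xR) wS Exw.
  by have := Rcl x w xR Hxw; rewrite inE.
have HconR : forall x, x \in R -> connect (resE E R) x v.
  move=> x xR; have := RA x xR; rewrite inE.
  apply: (connect_closed (P := fun z => z \in R)) xR.
  move=> c d cR Hcd; have dR := Rcl c d cR Hcd; rewrite dR /resE cR dR.
  by case/and3P: Hcd.
have [q [Hszq Hpq Huq HallR]] := L2 Eirr vR HdegR HconR.
have qS : all (mem S) (v :: q).
  by rewrite /= vS; apply/allP => z /(allP HallR) /RS.
case: rest Hpb Hpos Hdeg sumE => [|c r'] Hpb Hpos Hdeg sumE.
  exists [:: 0; b], q; split => //.
  - by rewrite /= eqxx.
  - by rewrite /= cats0 -Hszq; exact: okp_back.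
pose x0 := last v q.
pose X := [set z in belast v q].
have [q1 [q' Eq]] : exists q1 q', q = q1 :: q'.
  by case: (q) Hszq => [|q1 q'] /= Hb; [rewrite -Hb in bpos | exists q1, q'].
have vX : v \in X by rewrite inE Eq /= mem_head.
have x0S : x0 \in S by apply: (allP qS); exact: mem_last.
have x0X : x0 \notin X by move: Huq; rewrite lastI rcons_uniq inE => /andP[].
have memq : forall z, z \in v :: q -> (z \in X) || (z == x0).
  by move=> z; rewrite lastI mem_rcons inE orbC inE.
have cardX : #|X| <= b by rewrite cardsE -Hszq -(size_belast v q) card_size.
have HS' : #|S :\: X| <= n.
  have : #|S :\: X| <= #|S :\ v|.
    apply: subset_leq_card; apply/subsetP => z /setDP[zS zX].
    by rewrite !inE zS andbT; apply: contraNneq zX => ->.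
  by move/leq_trans; apply; move: HS; rewrite (cardsD1 v S) vS.
have x0S' : x0 \in S :\: X by rewrite inE x0X x0S.
have Hdeg' : forall x, x \in S :\: X ->
    \sum_(k0 <- c :: r') k0 <= #|[set y in S :\: X | E x y]|.
  move=> x; rewrite inE => /andP[xX xS].
  have H1 := Hdeg x xS; rewrite sumE in H1.
  have H2 : #|[set y in S | E x y]| <= #|[set y in S :\: X | E x y] :|: X|.
    apply: subset_leq_card; apply/subsetP => w; rewrite !inE => /andP[wS Exw].
    by rewrite wS Exw !andbT; case: (w \in belast v q).
  have H3 : #|[set y in S :\: X | E x y] :|: X| <= #|[set y in S :\: X | E x y]| + b.
    case: (leq_card_setU [set y in S :\: X | E x y] X) => H _.
    by apply: leq_trans H _; rewrite leq_add2l.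
  by rewrite -(leq_add2l b) [b + #|_|]addnC; apply: leq_trans H1 (leq_trans H2 H3).
case/andP: (Hpos) => _ Hpos'.
have [ks_r [t_r [Hc Hok Hu Hall]]] := IH (S :\: X) (c :: r') x0 HS' isT Hpos' Hdeg' x0S'.
exists [:: 0, b & ks_r], (q ++ t_r); split.
- by rewrite leqnn /= eqxx andTb; exact: Hc.
- rewrite [pd _ _]/=; apply: okp_cat => //; rewrite -Hszq; exact: okp_back.
- rewrite -cons_uniq -cat_cons cat_uniq Huq andTb.
  move: Hu; rewrite cons_uniq => /andP[x0t Hut]; apply/andP; split; last exact: Hut.
  apply/hasPn => z zt; apply/negP => /memq /orP[zX|/eqP zx0].
    have : z \in S :\: X by apply: (allP Hall); rewrite inE zt orbT.
    by case/setDP => _; rewrite zX.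
  by move: x0t; rewrite -zx0 zt.
- move: qS => /= /andP[-> qS]; rewrite andTb all_cat qS andTb.
  apply/allP => z zt.
  have : z \in S :\: X by apply: (allP Hall); rewrite inE zt orbT.
  by case/setDP.
Qed.

Theorem theorem19 (V : finType) (E : rel V) (ks : seq nat) :
  irreflexive E ->
  0 < size ks ->
  (forall i, 0 < i < size ks -> 0 < nth 0 ks i) ->
  (forall x : V, \sum_(k <- ks) k <= outdeg E x) ->
  forall v : V, exists ks' : seq nat,
    [/\ size ks' = size ks,
        (forall i, i < size ks ->
           if odd i then nth 0 ks' i = nth 0 ks i else nth 0 ks i <= nth 0 ks' i)
      & contains_oriented_path E ks' v].
Proof.
move=> Eirr Hsz Hpos Hdeg v.
have Hpos' : all (fun k => 0 < k) (behead ks).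
  apply/(all_nthP 0) => i; rewrite size_behead nth_behead => Hi; apply: Hpos.
  by rewrite /= -ltn_predRL.
have Hdeg' : forall x, x \in [set: V] -> \sum_(k <- ks) k <= #|[set y in [set: V] | E x y]|.
  move=> x _; have := Hdeg x; rewrite /outdeg.
  have -> : [set y in [set: V] | E x y] = [set y | E x y] by apply/setP => y; rewrite !inE.
  by [].
have [ks' [t [Hc Hok Hu _]]] := main Eirr (leqnn #|[set: V]|) Hsz Hpos' Hdeg' (in_setT v).
have [Hsize Hnth] := condr_nth Hc.
exists ks'; split => //.
  by move=> i Hi; have := Hnth i Hi; case: (odd i).
exists (v :: t); split => //; rewrite path_dirs_pd.
  exact: okp_size Hok.
by move=> j Hj; exact: okp_nth Hok j Hj.
Qed.
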